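(* Let $n\ge 2$ and $m\ge 1$, let $(\mathbb{R}^n,g_0)$ be Euclidean space with coordinates $x=(x_1,\dots,x_n)$ and metric components $(g_0)_{ij}=\delta_{ij}$, and let $(F^m,g_F)$ be a Riemannian manifold of dimension $m$. Let $f,h:\mathbb{R}^n\to\mathbb{R}$ be smooth functions with $f>0$, and consider the warped product $M=\mathbb{R}^n\times_f F^m$ with metric $g=g_0\oplus f^2 g_F$. If $(M,g)$ is a gradient Ricci soliton with potential function $h$ (that is, $\mathrm{Ric}_g+\mathrm{Hess}_g(h)=\rho g$ for some constant $\rho\in\mathbb{R}$), then the warping function $f$ is invariant by translation, i.e. there exist constants $a_i,b_i\in\mathbb{R}$ and a function $P$ of class at least $C^1$ such that $$f(x_1,\dots,x_n)=P\Big(\sum_{i=1}^n (a_i x_i+b_i)\Big).$$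
   Context: A warped product $B\times_f F$ is the product manifold $B\times F$ with metric $g_B\oplus f^2 g_F$, where $f:B\to\mathbb{R}$ is positive. Functions on $\mathbb{R}^n$ (such as $f$ and $h$) are identified with their lifts to $M$ via the projection onto the first factor. $\mathrm{Ric}_g$ denotes the Ricci tensor and $\mathrm{Hess}_g(h)$ the Hessian of $h$ with respect to $g$. *)

(* Defs.v *)
From HB Require Import structures.
From mathcomp Require Import all_boot all_order all_algebra.
From mathcomp Require Import all_classical all_reals all_analysis.
Set Implicit Arguments. Unset Strict Implicit. Unset Printing Implicit Defensive.
Import Order.TTheory GRing.Theory Num.Theory.
Import numFieldNormedType.Exports.
Local Open Scope classical_set_scope.
Local Open Scope ring_scope.

Section Coord.
Variable R : realType.

Definition partial {N : nat} (k : 'I_N) (F : 'rV[R]_N -> R) : 'rV[R]_N -> R :=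
  fun p => 'D_(delta_mx ord0 k) F p.

Definition iter_partial {N : nat} (s : seq 'I_N) (F : 'rV[R]_N -> R) :=
  foldr (@partial N) F s.

Definition smooth_on {N : nat} (U : set 'rV[R]_N) (F : 'rV[R]_N -> R) :=
  forall (s : seq 'I_N) (p : 'rV[R]_N), U p -> differentiable (iter_partial s F) p.

Definition riemannian_metric_on {N : nat} (U : set 'rV[R]_N)
  (g : 'rV[R]_N -> 'M[R]_N) :=
  (forall i j, smooth_on U (fun p => g p i j)) /\
  (forall p, U p -> (g p)^T = g p) /\
  (forall p, U p -> forall v : 'rV[R]_N, v != 0 -> 0 < (v *m g p *m v^T) ord0 ord0).

Definition Christoffel {N : nat} (g : 'rV[R]_N -> 'M[R]_N) (k i j : 'I_N)
  (p : 'rV[R]_N) : R :=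
  2^-1 * \sum_(l < N) (invmx (g p)) k l *
     (partial i (fun q => g q j l) p + partial j (fun q => g q i l) p
      - partial l (fun q => g q i j) p).

Definition Ricci {N : nat} (g : 'rV[R]_N -> 'M[R]_N) (i j : 'I_N)
  (p : 'rV[R]_N) : R :=
  \sum_(k < N) (partial k (Christoffel g k i j) p - partial j (Christoffel g k i k) p
    + \sum_(l < N) (Christoffel g k k l p * Christoffel g l i j p
                    - Christoffel g k j l p * Christoffel g l i k p)).

Definition Hess {N : nat} (g : 'rV[R]_N -> 'M[R]_N) (H : 'rV[R]_N -> R)
  (i j : 'I_N) (p : 'rV[R]_N) : R :=
  partial i (partial j H) p - \sum_(k < N) Christoffel g k i j p * partial k H p.

Definition warped_metric {n m : nat} (f : 'rV[R]_n -> R) (gF : 'rV[R]_m -> 'M[R]_m)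
  : 'rV[R]_(n + m) -> 'M[R]_(n + m) :=
  fun p => block_mx 1%:M 0 0 ((f (lsubmx p)) ^+ 2 *: gF (rsubmx p)).

End Coord.

(* Main.v *)
Require Import Defs.
From HB Require Import structures.
From mathcomp Require Import all_boot all_order all_algebra.
From mathcomp Require Import all_classical all_reals all_analysis.
From mathcomp Require Import ring lra.
Import Order.TTheory GRing.Theory Num.Theory.
Import numFieldNormedType.Exports.
Local Open Scope classical_set_scope.
Local Open Scope ring_scope.
Set Implicit Arguments. Unset Strict Implicit. Unset Printing Implicit Defensive.
Section Line.
Variables (R : realType) (V W : normedModType R).

Lemma line_quot (F : V -> W) q v t0 :
  (fun h : R => h^-1 *: (((fun t : R => F (q + t *: v)) \o shift t0) (h *: 1) - F (q + t0 *: v)))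
  = (fun h => h^-1 *: ((F \o shift (q + t0 *: v)) (h *: v) - F (q + t0 *: v))).
Proof.
apply/funext => h /=; congr (_ *: (F _ - _)).
by rewrite [h *: 1]mulr1 scalerDl addrCA addrA.
Qed.

Lemma line_derive (F : V -> W) q v t0 :
  'D_1 (fun t : R => F (q + t *: v)) t0 = 'D_v F (q + t0 *: v).
Proof. by rewrite /derive line_quot. Qed.

Lemma line_derivable (F : V -> W) q v t0 :
  derivable (fun t : R => F (q + t *: v)) t0 1 <-> derivable F (q + t0 *: v) v.
Proof. by rewrite /derivable line_quot. Qed.

End Line.
Section B0.
Variables (R : realType).

Lemma derive_lineE (V V' W : normedModType R) (F : V -> W) (G : V' -> W) p v q w :
  (forall t : R, F (p + t *: v) = G (q + t *: w)) -> 'D_v F p = 'D_w G q.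
Proof.
move=> FG; have := line_derive F p v 0; have := line_derive G q w 0.
rewrite !scale0r !addr0 => <- <-.
by have -> : (fun t : R => F (p + t *: v)) = (fun t => G (q + t *: w)) by apply/funext.
Qed.

Lemma derivable_lineE (V V' W : normedModType R) (F : V -> W) (G : V' -> W) p v q w :
  (forall t : R, F (p + t *: v) = G (q + t *: w)) -> derivable F p v -> derivable G q w.
Proof.
move=> FG; have := line_derivable F p v 0; have := line_derivable G q w 0.
rewrite !scale0r !addr0 => <- <-.
by have -> : (fun t : R => F (p + t *: v)) = (fun t => G (q + t *: w)) by apply/funext.
Qed.

Lemma grad_sum n (F : 'rV[R]_n -> R) x v : differentiable F x ->
  'D_v F x = \sum_(i < n) v 0 i * partial i F x.
Proof.
move=> dF; rewrite deriveE // {1}(row_sum_delta v) linear_sum.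
apply: eq_bigr => i _; rewrite linearZ /= /partial deriveE //.
Qed.

Lemma smooth0 n (F : 'rV[R]_n -> R) x : smooth_on setT F -> differentiable F x.
Proof. by move=> sF; exact: (sF [::] x I). Qed.
Lemma smooth1 n (F : 'rV[R]_n -> R) i x : smooth_on setT F -> differentiable (partial i F) x.
Proof. by move=> sF; exact: (sF [:: i] x I). Qed.
Lemma smooth2 n (F : 'rV[R]_n -> R) i j x : smooth_on setT F ->
  differentiable (partial i (partial j F)) x.
Proof. by move=> sF; exact: (sF [:: i; j] x I). Qed.
Lemma smooth3 n (F : 'rV[R]_n -> R) i j k x : smooth_on setT F ->
  differentiable (partial i (partial j (partial k F))) x.
Proof. by move=> sF; exact: (sF [:: i; j; k] x I). Qed.
Lemma smooth_partial n (F : 'rV[R]_n -> R) i : smooth_on setT F -> smooth_on setT (partial i F).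
Proof. by move=> sF s x _; have := sF (rcons s i) x I; rewrite /iter_partial foldr_rcons. Qed.

Lemma cst_on_ball (phi : R -> R) (t0 d : R) :
  (forall t : R, `|t - t0| < d -> is_derive t (1:R) phi (0:R)) ->
  forall t, `|t - t0| < d -> phi t = phi t0.
Proof.
move=> D0 t td.
have inb s : s \in `[Num.min t t0, Num.max t t0] -> `|s - t0| < d.
  rewrite in_itv /= => /andP[h1 h2].
  case: (lerP t t0) => tt0.
    move: h1 h2; rewrite (min_l tt0) (max_r tt0) => h1 h2.
    rewrite ler0_norm ?subr_le0 //; apply: le_lt_trans td.
    by rewrite ler0_norm ?subr_le0 // lerN2 lerD2r.
  move: h1 h2; rewrite (min_r (ltW tt0)) (max_l (ltW tt0)) => h1 h2.
  rewrite ger0_norm ?subr_ge0 //; apply: le_lt_trans td.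
  by rewrite ger0_norm ?subr_ge0 ?(ltW tt0) // lerD2r.
have cont : {within `[Num.min t t0, Num.max t t0], continuous phi}.
  apply: derivable_within_continuous => s /inb /D0 H; exact: ex_derive.
have mm : Num.min t t0 <= Num.max t t0 by rewrite ge_min !le_max !lexx.
have [c _ E] := MVT_segment mm (fun s hs => D0 s (inb s (subset_itv_oo_cc hs))) cont.
move: E; rewrite mul0r => /eqP; rewrite subr_eq0 => /eqP E.
move: E.
by case: (lerP t t0) => _ ->.
Qed.

End B0.
Section B0b.
Variables (R : realType).
Lemma sd0 n (F : 'rV[R]_n -> R) x v : smooth_on setT F -> derivable F x v.
Proof. by move=> sF; apply: diff_derivable; exact: smooth0. Qed.
Lemma sd1 n (F : 'rV[R]_n -> R) i x v : smooth_on setT F -> derivable (partial i F) x v.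
Proof. by move=> sF; apply: diff_derivable; exact: smooth1. Qed.
Lemma sd2 n (F : 'rV[R]_n -> R) i j x v : smooth_on setT F ->
  derivable (partial i (partial j F)) x v.
Proof. by move=> sF; apply: diff_derivable; exact: smooth2. Qed.
Lemma alg1 (S H f m : R) : f != 0 -> m != 0 -> S = f * ((H - (H - m * S / f)) * m^-1).
Proof. by move=> f0 m0; field; rewrite f0 m0. Qed.
End B0b.
Section Schwarz.
Variables (R : realType) (V : normedModType R).

Lemma line_is_derive (G : V -> R) q v (t : R) : derivable G (q + t *: v) v ->
  is_derive t (1:R) (fun r : R => G (q + r *: v)) ('D_v G (q + t *: v)).
Proof.
move=> dG; apply: DeriveDef; first exact/line_derivable.
exact: line_derive.
Qed.

Lemma mvt_line (phi dphi : R -> R) (s : R) : 0 < s ->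
  (forall t, is_derive t (1:R) phi (dphi t)) ->
  exists2 c, 0 < c < s & phi s - phi 0 = dphi c * s.
Proof.
move=> s0 D.
have cont : {within `[0, s], continuous phi}.
  apply: derivable_within_continuous => r _; by case: (D r).
have [c cI E] := MVT s0 (fun r _ => D r) cont.
by exists c; [move: cI; rewrite in_itv /= | rewrite E subr0].
Qed.

Lemma box_mvt (F : V -> R) u w x (s : R) : 0 < s ->
  (forall y, derivable F y u) -> (forall y, derivable ('D_u F) y w) ->
  exists xi, exists eta, [/\ 0 < xi < s, 0 < eta < s &
   F (x + s *: u + s *: w) - F (x + s *: u) - F (x + s *: w) + F x =
   s * (s * 'D_w ('D_u F) (x + xi *: u + eta *: w))].
Proof.
move=> s0 dF dDF.
pose phi t := F ((x + s *: w) + t *: u) - F (x + t *: u).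
have Dphi t : is_derive t (1:R) phi ('D_u F ((x + s *: w) + t *: u) - 'D_u F (x + t *: u)).
  apply: is_deriveB; exact: line_is_derive.
have [xi xiI E1] := mvt_line s0 Dphi.
pose psi r := 'D_u F ((x + xi *: u) + r *: w).
have Dpsi r : is_derive r (1:R) psi ('D_w ('D_u F) ((x + xi *: u) + r *: w)).
  exact: line_is_derive.
have [eta etaI E2] := mvt_line s0 Dpsi.
exists xi, eta; split => //.
move: E1; rewrite /phi !scale0r !addr0 => E1.
have -> : F (x + s *: u + s *: w) - F (x + s *: u) - F (x + s *: w) + F x
   = F (x + s *: w + s *: u) - F (x + s *: u) - (F (x + s *: w) - F x).
  by rewrite [x + s *: u + _]addrAC; ring.
rewrite E1; move: E2; rewrite /psi !scale0r !addr0 => E2.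
rewrite [x + s *: w + xi *: u]addrAC E2; ring.
Qed.


Lemma cont_ball (G : V -> R) x e : 0 < e -> {for x, continuous G} ->
  exists2 d, 0 < d & forall y, `|x - y| < d -> `|G x - G y| < e.
Proof.
move=> e0 /cvgrPdist_lt /(_ e e0) /nbhs_ballP [d d0 H].
by exists d => // y xy; apply: H; rewrite -ball_normE.
Qed.

Lemma real_contra (A B P1 P2 : R) : A != B -> P1 = P2 ->
  `|A - P1| < `|A - B| / 2 -> `|B - P2| < `|A - B| / 2 -> False.
Proof.
move=> AB <- h1 h2.
have tri : `|A - B| <= `|A - P1| + `|P1 - B|.
  have {1}-> : A - B = (A - P1) + (P1 - B) by rewrite addrA subrK.
  exact: ler_normD.
rewrite distrC in h2.
have := le_lt_trans tri (ltrD h1 h2).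
by rewrite -splitr ltxx.
Qed.

Lemma schwarz (F : V -> R) u w x :
  (forall y, derivable F y u) -> (forall y, derivable F y w) ->
  (forall y, derivable ('D_u F) y w) -> (forall y, derivable ('D_w F) y u) ->
  {for x, continuous ('D_w ('D_u F))} -> {for x, continuous ('D_u ('D_w F))} ->
  'D_w ('D_u F) x = 'D_u ('D_w F) x.
Proof.
move=> dFu dFw dDu dDw c1 c2.
suff H : forall A B : R, A = 'D_w ('D_u F) x -> B = 'D_u ('D_w F) x -> A = B by exact: H.
move=> A B EA EB.
apply/eqP; apply/negPn/negP => AB.
have e0 : 0 < `|A - B| / 2 by rewrite divr_gt0 // normr_gt0 subr_eq0.
have [d1 d10 H1] := cont_ball e0 c1.
have [d2 d20 H2] := cont_ball e0 c2.
pose d := Num.min d1 d2.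
have d0 : 0 < d by rewrite lt_min d10 d20.
have md1 : d <= d1 by rewrite /d ge_min lexx.
have md2 : d <= d2 by rewrite /d ge_min lexx orbT.
pose K := `|u| + `|w| + 1.
have K0 : 0 < K by rewrite /K ltr_pwDr // addr_ge0.
pose s := d / (2 * K).
have s0 : 0 < s by rewrite divr_gt0 // mulr_gt0.
have bnd2 (a b : R) : 0 < a < s -> 0 < b < s -> `|x - (x + a *: u + b *: w)| < d.
  move=> /andP[a0 a1] /andP[b0 b1].
  rewrite -addrA opprD addrA subrr add0r normrN.
  apply: (le_lt_trans (ler_normD _ _)); rewrite !normrZ !ger0_norm ?ltW //.
  have : a * `|u| + b * `|w| <= s * K.
    rewrite /K mulrDr mulr1 mulrDr; apply: (@le_trans _ _ (s * `|u| + s * `|w|)).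
      by apply: lerD; apply: ler_wpM2r => //; apply: ltW.
    by rewrite lerDl ltW.
  move=> /le_lt_trans; apply.
  have -> : s * K = d / 2 by rewrite /s; field; rewrite gt_eqF.
  by rewrite ltr_pdivrMr // ltr_pMr // ltr1n.
have bnd3 (a b : R) : 0 < a < s -> 0 < b < s -> `|x - (x + a *: w + b *: u)| < d.
  by move=> ha hb; rewrite -addrA [a *: w + _]addrC addrA; apply: bnd2.
have [a [b [ha hb E1]]] := box_mvt x s0 dFu dDu.
have [a' [b' [ha' hb' E2]]] := box_mvt x s0 dFw dDw.
have Esym : F (x + s *: u + s *: w) - F (x + s *: u) - F (x + s *: w) + F x =
  F (x + s *: w + s *: u) - F (x + s *: w) - F (x + s *: u) + F x.
  by rewrite [x + s *: w + _]addrAC [_ - F (x + s *: w) - _]addrAC.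
have E : 'D_w ('D_u F) (x + a *: u + b *: w) = 'D_u ('D_w F) (x + a' *: w + b' *: u).
  have E0 := etrans (esym E1) (etrans Esym E2).
  by move: E0 => /(mulfI (lt0r_neq0 s0)) /(mulfI (lt0r_neq0 s0)).
have h1 := H1 _ (lt_le_trans (bnd2 _ _ ha hb) md1).
have h2 := H2 _ (lt_le_trans (bnd3 _ _ ha' hb') md2).
rewrite -EA in h1; rewrite -EB in h2.
exact: (real_contra AB E h1 h2).
Qed.

End Schwarz.
Section Coord.
Variables (R : realType) (n : nat).
Implicit Types (F G : 'rV[R]_n -> R).

Lemma sym2 F i j x : smooth_on setT F ->
  partial i (partial j F) x = partial j (partial i F) x.
Proof.
move=> sF; apply: (@schwarz R _ F (delta_mx 0 j) (delta_mx 0 i) x).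
- by move=> y; apply: diff_derivable; exact: smooth0.
- by move=> y; apply: diff_derivable; exact: smooth0.
- by move=> y; apply: diff_derivable; exact: smooth1.
- by move=> y; apply: diff_derivable; exact: smooth1.
- by apply: differentiable_continuous; exact: smooth2.
- by apply: differentiable_continuous; exact: smooth2.
Qed.

Lemma derive_aff G x v (c k : R) : derivable G x v ->
  'D_v (fun y => (G y - c) * k) x = 'D_v G x * k.
Proof.
move=> dG.
have -> : (fun y => (G y - c) * k) = G * cst k - cst (c * k).
  by apply/funext => y /=; rewrite mulrBl.
have dk : derivable (cst k : 'rV[R]_n -> R) x v := derivable_cst k x v.
have dGk : derivable (G * cst k) x v := derivableM dG dk.
rewrite (deriveB dGk (derivable_cst _ _ _)) (deriveM dG dk) !derive_cst.
by rewrite subr0 scaler0 add0r /= [k *: _]mulrC.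
Qed.

Lemma derivable_aff G x v (c k : R) : derivable G x v ->
  derivable (fun y => (G y - c) * k) x v.
Proof.
move=> dG.
have -> : (fun y => (G y - c) * k) = G * cst k - cst (c * k).
  by apply/funext => y /=; rewrite mulrBl.
have dk : derivable (cst k : 'rV[R]_n -> R) x v := derivable_cst k x v.
exact: (derivableB (derivableM dG dk) (derivable_cst _ _ _)).
Qed.

Lemma derive_fmul F G x v : derivable F x v -> derivable G x v ->
  'D_v (fun y => F y * G y) x = F x * 'D_v G x + G x * 'D_v F x.
Proof. by move=> dF dG; exact: (deriveM dF dG). Qed.

Lemma compatC (f h : 'rV[R]_n -> R) (m : nat) (rho : R) :
  smooth_on setT f -> smooth_on setT h -> (forall x, 0 < f x) -> (m != 0)%N ->
  (forall x i j, partial i (partial j h) x - m%:R * partial j (partial i f) x / f x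
     = rho * (i == j)%:R) ->
  forall x i j k, partial i (partial j f) x * partial k f x
     = partial k (partial j f) x * partial i f x.
Proof.
move=> sf sh fpos m0 BASE x i j k.
have mR : (m%:R : R) != 0 by rewrite pnatr_eq0.
have fn0 y : f y != 0 by rewrite gt_eqF.
pose mi := (m%:R : R)^-1.
have Sform a b : partial a (partial b f) =
    fun y => f y * ((partial a (partial b h) y - rho * (a == b)%:R) * mi).
  apply/funext => y; rewrite -(BASE y a b) (sym2 _ _ _ sf) /mi.
  exact: alg1.
have Dform a b c : partial c (partial a (partial b f)) x =
   f x * (partial c (partial a (partial b h)) x * mi) +
   ((partial a (partial b h) x - rho * (a == b)%:R) * mi) * partial c f x.
  rewrite [in LHS](Sform a b) /partial.
  have d2 := @sd2 R n h a b x (delta_mx 0 c) sh.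
  rewrite (derive_fmul (@sd0 R n f x (delta_mx 0 c) sf) (derivable_aff (c:=rho * (a == b)%:R) (k:=mi) d2)).
  by rewrite (derive_aff (rho * (a == b)%:R) mi d2).
have T1 : partial k (partial i (partial j f)) x = partial i (partial k (partial j f)) x.
  exact: (sym2 _ _ _ (smooth_partial j sf)).
have T2 : partial k (partial i (partial j h)) x = partial i (partial k (partial j h)) x.
  exact: (sym2 _ _ _ (smooth_partial j sh)).
move: T1; rewrite (Dform i j k) (Dform k j i) T2 => /addrI E.
have Sij := congr1 (fun F => F x) (Sform i j).
have Skj := congr1 (fun F => F x) (Sform k j).
rewrite /= in Sij Skj.
by rewrite Sij Skj -[in LHS]mulrA E mulrA.
Qed.

End Coord.
Section Hyper0.
Variables (R : realType).

Lemma is_derive_lin (V : normedModType R) n (g : 'I_n -> V -> R) (c : 'I_n -> R) x v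
  (dg : 'I_n -> R) : (forall j, is_derive x v (g j) (dg j)) ->
  is_derive x v (fun y => \sum_(j < n) c j * g j y) (\sum_(j < n) c j * dg j).
Proof.
move=> D.
have -> : (fun y => \sum_(j < n) c j * g j y) = \sum_(j < n) (c j \*: g j).
  by rewrite fct_sumE; apply/funext => y.
have H : forall j, is_derive x v (c j \*: g j) (c j *: dg j) by move=> j; exact: is_deriveZ.
exact: (is_derive_sum H).
Qed.

Lemma connectedR (B : set R) : B !=set0 -> open B -> closed B -> B = setT.
Proof.
move=> B0 oB cB.
have cT : connected [set: R] by apply/connected_intervalP => ? ? _ _ ? _.
apply: cT => //; first by exists B => //; rewrite setTI.
by exists B => //; rewrite setTI.
Qed.

Lemma cont_ballR (G : R -> R) x e : 0 < e -> {for x, continuous G} ->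
  exists2 d, 0 < d & forall y, `|y - x| < d -> `|G x - G y| < e.
Proof.
move=> e0 /cvgrPdist_lt /(_ e e0) /nbhs_ballP [d d0 H].
by exists d => // y xy; apply: H; rewrite -ball_normE /= distrC.
Qed.

Lemma derivable_cont (G : R -> R) x : derivable G x 1 -> {for x, continuous G}.
Proof. by move=> /derivable1_diffP; exact: differentiable_continuous. Qed.

End Hyper0.

Section Hyper.
Variables (R : realType) (n : nat) (f : 'rV[R]_n -> R).
Hypothesis sf : smooth_on setT f.
Hypothesis C : forall x i j k, partial i (partial j f) x * partial k f x
     = partial k (partial j f) x * partial i f x.

Lemma alg2 (u up g gp : R) : g != 0 -> up * g = u * gp ->
  u *: (- g ^- 2 *: gp) + g^-1 *: up = 0.
Proof.
move=> g0 E; rewrite /GRing.scale /=.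
have -> : up = u * gp / g by rewrite -E mulfK.
by field.
Qed.

Lemma alg3 (a b c : R) : a * (b * c) = c * (a * b).
Proof. by rewrite [RHS]mulrC mulrA. Qed.

Lemma hyper (x v : 'rV[R]_n) k : partial k f x != 0 -> 'D_v f x = 0 ->
  forall t j, partial j f (x + t *: v) = partial j f x.
Proof.
move=> nk Dv0.
pose g j (t : R) := partial j f (x + t *: v).
have Dg j t : is_derive t (1:R) (g j)
    (\sum_(i < n) v 0 i * partial i (partial j f) (x + t *: v)).
  have H := @line_is_derive R _ (partial j f) x v t (sd1 sf).
  by rewrite (grad_sum _ (smooth1 _ _ sf)) in H.
pose u t := \sum_(j < n) v 0 j * g j t.
pose D j t := \sum_(i < n) v 0 i * partial i (partial j f) (x + t *: v).
have Du t : is_derive t (1:R) u (\sum_(j < n) v 0 j * D j t).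
  exact: (is_derive_lin _ (fun j => Dg j t)).
have u0 : u 0 = 0.
  by rewrite /u /g scale0r addr0 -(grad_sum _ (smooth0 _ sf)) Dv0.
have K2 t j : D j t * g k t = partial k (partial j f) (x + t *: v) * u t.
  rewrite /D /u /g mulr_suml mulr_sumr; apply: eq_bigr => i _.
  have E := C (x + t *: v) i j k.
  rewrite -mulrA.
  apply: (etrans (congr1 (fun z => v 0 i * z) E)).
  exact: mulrCA.
have K1 t : (\sum_(j < n) v 0 j * D j t) * g k t = u t * D k t.
  rewrite mulr_suml mulr_sumr; apply: eq_bigr => j _.
  rewrite -mulrA K2 /D.
  have E : partial k (partial j f) (x + t *: v) = partial j (partial k f) (x + t *: v).
    exact: (sym2 _ _ _ sf).
  rewrite E; exact: alg3.
pose B := [set t : R | \sum_(j < n) (g j t - g j 0) ^+ 2 = 0].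
have Bchar t : B t -> forall j, g j t = g j 0.
  rewrite /B /= => Bt j.
  have H := psumr_eq0P (fun i _ => sqr_ge0 (g i t - g i 0)) Bt.
  have := H j isT.
  by move/eqP; rewrite sqrf_eq0 subr_eq0 => /eqP.
have Bintro t : (forall j, g j t = g j 0) -> B t.
  by move=> H; rewrite /B /=; apply: big1 => j _; rewrite H subrr expr0n.
have closedB : closed B.
  pose psi := fun t => \sum_(j < n) (g j t - g j 0) ^+ 2.
  have cpsi : continuous psi.
    move=> t; apply: derivable_cont.
    have -> : psi = \sum_(j < n) ((g j - cst (g j 0)) * (g j - cst (g j 0))).
      by rewrite fct_sumE; apply/funext => s; rewrite /psi; apply: eq_bigr => j _; rewrite expr2.
    apply: derivable_sum => j.
    have dg : derivable (g j - cst (g j 0)) t 1.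
      apply: derivableB; last exact: derivable_cst.
      by case: (Dg j t).
    exact: (derivableM dg dg).
  have -> : B = psi @^-1` [set s | s = 0] by [].
  by apply: preimage_closed => [s _|]; [exact: cpsi | exact: closed_eq].
have openB : open B.
  rewrite openE => t0 Bt0; rewrite /interior.
  have gk0 : g k t0 != 0.
    by rewrite (Bchar _ Bt0) /g scale0r addr0.
  have gk0p : 0 < `|g k t0| by rewrite normr_gt0.
  have dk0 : derivable (g k) t0 1 by case: (Dg k t0).
  have [d d0 Hd] := cont_ballR gk0p (derivable_cont dk0).
  have gkn s : `|s - t0| < d -> g k s != 0.
    move=> /Hd; apply: contraTneq => ->; by rewrite subr0 ltxx.
  have ut0 : u t0 = 0.
    rewrite -u0 /u; apply: eq_bigr => j _; by rewrite (Bchar _ Bt0).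
  pose w s := u s * (g k s)^-1.
  have Dw s : `|s - t0| < d -> is_derive s (1:R) w 0.
    move=> sd; have gs := gkn s sd.
    have du : derivable u s 1 by case: (Du s).
    have dgk : derivable (g k) s 1 by case: (Dg k s).
    have dgkV := derivableV gs dgk.
    apply: DeriveDef; first exact: (derivableM du dgkV).
    rewrite (deriveM du dgkV) (deriveV gs dgk).
    rewrite (@derive_val _ _ _ _ _ _ _ (Du s)) (@derive_val _ _ _ _ _ _ _ (Dg k s)).
    apply: alg2 => //; exact: K1.
  have ub s : `|s - t0| < d -> u s = 0.
    move=> sd; have := cst_on_ball Dw sd; rewrite /w ut0 mul0r => H.
    by rewrite -(divfK (gkn s sd) (u s)) H mul0r.
  apply/nbhs_ballP; exists d => // s; rewrite -ball_normE /= => sd.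
  rewrite distrC in sd.
  apply: Bintro => j.
  have Dgj r : `|r - t0| < d -> is_derive r (1:R) (g j) 0.
    move=> rd; have := Dg j r.
    have : D j r = 0.
      have := K2 r j; rewrite (ub r rd) mulr0 => /eqP; rewrite mulf_eq0 (negbTE (gkn r rd)) orbF.
      by move/eqP.
    by rewrite /D => ->.
  by rewrite (cst_on_ball Dgj sd) (Bchar _ Bt0).
have BT : B = setT.
  apply: connectedR => //; exists 0; apply: Bintro => j //.
move=> t j; have := Bchar t; rewrite BT => /(_ I j).
by rewrite /g scale0r addr0.
Qed.

End Hyper.
Section Global.
Variables (R : realType) (n : nat) (f : 'rV[R]_n -> R).
Hypothesis sf : smooth_on setT f.
Hypothesis C : forall x i j k, partial i (partial j f) x * partial k f x
     = partial k (partial j f) x * partial i f x.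

Definition dot (a v : 'rV[R]_n) := \sum_(i < n) v 0 i * a 0 i.

Lemma Dgrad y v : 'D_v f y = dot (\row_i partial i f y) v.
Proof.
rewrite (grad_sum _ (smooth0 y sf)) /dot; apply: eq_bigr => i _; by rewrite mxE.
Qed.

Lemma D_lin y (v w : 'rV[R]_n) (s : R) : 'D_(v + s *: w) f y = 'D_v f y + s * 'D_w f y.
Proof.
rewrite !(deriveE _ (smooth0 y sf)) linearD linearZ //.
Qed.

Lemma key_prop : exists a : 'rV[R]_n, forall y v, dot a v = 0 -> 'D_v f y = 0.
Proof.
have [[x0 [k0 nz]] | none] := pselect (exists x0 k, partial k f x0 != 0); last first.
  exists 0 => y v _; rewrite Dgrad /dot; apply: big1 => i _; rewrite mxE.
  case: (eqVneq (partial i f y) 0) => [->|H]; first by rewrite mulr0.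
  by exfalso; apply: none; exists y, i.
exists (\row_i partial i f x0) => y v dv.
have Dx0 : 'D_v f x0 = 0 by rewrite Dgrad.
case: (eqVneq ('D_v f y) 0) => // Dy.
pose s := 'D_(y - x0) f y / 'D_v f y.
pose z := x0 + s *: v.
have hz := hyper sf C nz Dx0 s.
have [[kk nkk]|H] := pselect (exists kk, partial kk f y != 0); last first.
  move/eqP: Dy; case; rewrite Dgrad /dot; apply: big1 => i _; rewrite mxE.
  case: (eqVneq (partial i f y) 0) => [->|Hi]; first by rewrite mulr0.
  by exfalso; apply: H; exists i.
have Dw : 'D_(z - y) f y = 0.
  have -> : z - y = - (y - x0) + s *: v by rewrite /z opprB addrAC.
  rewrite D_lin.
  have -> : 'D_(- (y - x0)) f y = - 'D_(y - x0) f y.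
    by rewrite !(deriveE _ (smooth0 y sf)) linearN.
  by rewrite /s divfK // addNr.
have hy := hyper sf C nkk Dw 1.
have E j : partial j f y = partial j f x0.
  by rewrite -(hy j) scale1r addrC subrK hz.
rewrite Dgrad -Dx0 Dgrad; congr dot; apply/matrixP => i j; by rewrite !mxE E.
Qed.

Lemma dotB (a v w : 'rV[R]_n) : dot a (v - w) = dot a v - dot a w.
Proof. by rewrite /dot -sumrB; apply: eq_bigr => i _; rewrite !mxE mulrBl. Qed.

Lemma dotZ (a w : 'rV[R]_n) (s : R) : dot a (s *: w) = s * dot a w.
Proof. by rewrite /dot mulr_sumr; apply: eq_bigr => i _; rewrite !mxE mulrA. Qed.

Lemma base_final : exists a b : 'I_n -> R, exists P : R -> R,
    (forall t, derivable P t 1) /\ continuous (derive1 P) /\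
    forall x : 'rV[R]_n, f x = P (\sum_(i < n) (a i * x ord0 i + b i)).
Proof.
have [a Ka] := key_prop.
have cstv y v : dot a v = 0 -> forall t : R, f (y + t *: v) = f y.
  move=> dv t.
  have D s : `|s - 0| < `|t| + 1 -> is_derive s (1:R) (fun r : R => f (y + r *: v)) 0.
    move=> _; apply: is_derive_eq (@line_is_derive R _ f y v s (sd0 sf)) _.
    exact: Ka.
  have := cst_on_ball D (t:=t); rewrite scale0r addr0; apply.
  by rewrite subr0 ltrDl.
pose q := dot a a.
pose c := q^-1 *: a.
exists (fun i => a 0 i), (fun _ => 0), (fun s => f (0 + s *: c)).
split; first by move=> t; apply/line_derivable; exact: (sd0 sf).
split.
  pose G := fun y => \sum_(i < n) c 0 i * partial i f y.
  have dG y : derivable G y c.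
    have H i : is_derive y c (partial i f) ('D_c (partial i f) y).
      by apply: DeriveDef => //; exact: (sd1 sf).
    by case: (is_derive_lin (fun i => c 0 i) H).
  have -> : derive1 (fun s => f (0 + s *: c)) = fun t => G (0 + t *: c).
    apply/funext => t; rewrite derive1E line_derive.
    exact: (grad_sum _ (smooth0 _ sf)).
  move=> t; apply: derivable_cont; apply/line_derivable; exact: dG.
move=> x.
have -> : \sum_(i < n) (a 0 i * x ord0 i + 0) = dot a x.
  by rewrite /dot; apply: eq_bigr => i _; rewrite addr0 mulrC.
case: (eqVneq a 0) => [a0|an0].
  have dx : dot a x = 0 by rewrite a0 /dot; apply: big1 => i _; rewrite mxE mulr0.
  have := cstv 0 x dx 1; rewrite add0r scale1r => ->.
  by rewrite /c a0 !scaler0 addr0.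
have q0 : q != 0.
  apply: contra an0 => /eqP q0; apply/eqP/matrixP => i j; rewrite (ord1 i) mxE.
  have H k : 0 <= a 0 k * a 0 k by rewrite -expr2 sqr_ge0.
  have := psumr_eq0P (fun k _ => H k) q0; move=> /(_ j isT) /eqP.
  by rewrite mulf_eq0 orbb => /eqP.
pose z := dot a x *: c.
have dv : dot a (x - z) = 0.
  rewrite dotB /z dotZ /c dotZ -/q mulVf // mulr1 subrr //.
have := cstv z (x - z) dv 1; rewrite scale1r addrC subrK => ->.
by rewrite add0r.
Qed.

End Global.
Section Mx.
Variables (R : realType) (n m : nat).

Lemma inv_block (D : 'M[R]_m) :
  invmx (block_mx 1%:M 0 0 D : 'M[R]_(n + m)) = block_mx 1%:M 0 0 (invmx D).
Proof.
have uE : (block_mx 1%:M 0 0 D : 'M[R]_(n + m)) \in unitmx = (D \in unitmx).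
  by rewrite !unitmxE det_ublock det1 mul1r.
case uD : (D \in unitmx); last first.
  by rewrite !invmx_out // inE /= ?uE uD.
set A := block_mx _ _ _ _.
have uA : A \in unitmx by rewrite uE.
have BA : block_mx 1%:M 0 0 (invmx D) *m A = 1%:M.
  rewrite mulmx_block !mulmx0 !mul0mx !addr0 !add0r mulmx1 mulVmx //.
  by rewrite [RHS]scalar_mx_block.
have := mulmxV uA; move=> AV.
by rewrite -[invmx A]mul1mx -BA -mulmxA AV mulmx1.
Qed.

Lemma posdef_unit (M : 'M[R]_m) :
  (forall v : 'rV[R]_m, v != 0 -> 0 < (v *m M *m v^T) 0 0) -> M \in unitmx.
Proof.
move=> pos; apply/negPn/negP => nu.
have : kermx M != 0 by rewrite kermx_eq0 row_free_unit.
case/matrix0Pn => i [j Hij].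
pose v := row i (kermx M).
have v0 : v != 0 by apply/matrix0Pn; exists 0, j; rewrite mxE.
have vM : v *m M = 0 by rewrite -row_mul mulmx_ker row0.
by have := pos v v0; rewrite vM mul0mx mxE ltxx.
Qed.

Lemma lsub_line (q : 'rV[R]_(n + m)) i (t : R) :
  lsubmx (q + t *: delta_mx 0 (lshift m i)) = lsubmx q + t *: delta_mx 0 i.
Proof.
apply/matrixP => a b; rewrite !mxE eq_lshift //.
Qed.

Lemma rsub_line (q : 'rV[R]_(n + m)) i (t : R) :
  rsubmx (q + t *: delta_mx 0 (lshift m i)) = rsubmx q.
Proof.
apply/matrixP => a b; rewrite !mxE eq_rlshift andbF mulr0 addr0 //.
Qed.

Lemma partial_L (Psi : 'rV[R]_n -> 'rV[R]_m -> R) q i :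
  partial (lshift m i) (fun q => Psi (lsubmx q) (rsubmx q)) q
  = partial i (fun x => Psi x (rsubmx q)) (lsubmx q).
Proof.
rewrite /partial; apply: (@derive_lineE R _ _ _ _ (fun x => Psi x (rsubmx q)) q _ (lsubmx q)) => t /=.
by rewrite lsub_line rsub_line.
Qed.

Lemma partial_cst N (Phi : 'rV[R]_N -> R) c k q : (forall q, Phi q = c) -> partial k Phi q = 0.
Proof.
move=> H; have -> : Phi = cst c by apply/funext.
exact: derive_cst.
Qed.

End Mx.
Section Warped.
Variables (R : realType) (n m : nat) (f : 'rV[R]_n -> R) (gF : 'rV[R]_m -> 'M[R]_m).
Local Notation G := (warped_metric f gF).
Local Notation L i := (lshift m i).
Local Notation Rr a := (rshift n a).

Lemma G_LL q i j : G q (L i) (L j) = (i == j)%:R.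
Proof. by rewrite /warped_metric block_mxEul mxE. Qed.
Lemma G_LR q i a : G q (L i) (Rr a) = 0.
Proof. by rewrite /warped_metric block_mxEur mxE. Qed.
Lemma G_RL q a i : G q (Rr a) (L i) = 0.
Proof. by rewrite /warped_metric block_mxEdl mxE. Qed.
Lemma G_RR q a b : G q (Rr a) (Rr b) = f (lsubmx q) ^+ 2 * gF (rsubmx q) a b.
Proof. by rewrite /warped_metric block_mxEdr mxE. Qed.

Lemma Gi_LL q k l : invmx (G q) (L k) (L l) = (k == l)%:R.
Proof. by rewrite /warped_metric inv_block block_mxEul mxE. Qed.
Lemma Gi_LR q k a : invmx (G q) (L k) (Rr a) = 0.
Proof. by rewrite /warped_metric inv_block block_mxEur mxE. Qed.
Lemma Gi_RL q a k : invmx (G q) (Rr a) (L k) = 0.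
Proof. by rewrite /warped_metric inv_block block_mxEdl mxE. Qed.
Lemma Gi_RR q a b : invmx (G q) (Rr a) (Rr b)
  = invmx (f (lsubmx q) ^+ 2 *: gF (rsubmx q)) a b.
Proof. by rewrite /warped_metric inv_block block_mxEdr. Qed.

Lemma PDbase k j l q : partial k (fun q => G q (L j) l) q = 0.
Proof.
rewrite -(@splitK n m l); case: (fintype.split l) => [l'|b] /=.
  by apply: (@partial_cst R _ _ ((j == l')%:R)) => q'; rewrite G_LL.
by apply: (@partial_cst R _ _ 0) => q'; rewrite G_LR.
Qed.

Lemma PDbase' k j l q : partial k (fun q => G q l (L j)) q = 0.
Proof.
rewrite -(@splitK n m l); case: (fintype.split l) => [l'|b] /=.
  by apply: (@partial_cst R _ _ ((l' == j)%:R)) => q'; rewrite G_LL.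
by apply: (@partial_cst R _ _ 0) => q'; rewrite G_RL.
Qed.

Lemma CH1 q l i j : Christoffel G l (L i) (L j) q = 0.
Proof.
rewrite /Christoffel big1 ?mulr0 // => l' _.
by rewrite PDbase PDbase PDbase subr0 addr0 mulr0.
Qed.

Lemma CH3 q k j b : Christoffel G (L k) (L j) (Rr b) q = 0.
Proof.
rewrite /Christoffel big1 ?mulr0 // => l _.
rewrite PDbase PDbase subr0 addr0.
rewrite -(@splitK n m l); case: (fintype.split l) => [l'|c] /=.
  by rewrite PDbase' mulr0.
by rewrite Gi_LR mul0r.
Qed.

Lemma scaleE (a b : R) : a *: b = a * b.
Proof. by []. Qed.

Lemma dsq N (F : 'rV[R]_N -> R) x v (c : R) : derivable F x v ->
  'D_v (fun z => F z ^+ 2 * c) x = 2 * F x * 'D_v F x * c.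
Proof.
move=> dF.
have -> : (fun z => F z ^+ 2 * c) = (F * F) * cst c by apply/funext => z; rewrite /= expr2.
have dFF := derivableM dF dF.
rewrite (deriveM dFF (derivable_cst c x v)) (deriveM dF dF) derive_cst.
rewrite !scaleE /=; ring.
Qed.

Lemma PD2 q a b i : differentiable f (lsubmx q) ->
  partial (L i) (fun q => G q (Rr a) (Rr b)) q
  = 2 * f (lsubmx q) * partial i f (lsubmx q) * gF (rsubmx q) a b.
Proof.
move=> df.
have E := partial_L (fun x y => f x ^+ 2 * gF y a b) q i; simpl in E.
have -> : (fun q => G q (Rr a) (Rr b))
   = fun q => f (lsubmx q) ^+ 2 * gF (rsubmx q) a b.
  by apply/funext => q'; rewrite G_RR.
rewrite E /partial.
by rewrite (dsq _ (diff_derivable df)).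
Qed.

Lemma alg4 (s u v w z : R) : (s * u) * (2 * v * w * z) = (s * 2 * v * w) * (u * z).
Proof. ring. Qed.

Lemma alg5 (fx fi d : R) : fx != 0 ->
  2^-1 * (0 + (fx ^+ 2)^-1 * 2 * fx * fi * d) = fi / fx * d.
Proof. move=> f0; field; exact: f0. Qed.

Lemma CH4 q a i b : gF (rsubmx q) \in unitmx -> (gF (rsubmx q))^T = gF (rsubmx q) ->
  f (lsubmx q) != 0 -> differentiable f (lsubmx q) ->
  Christoffel G (Rr a) (L i) (Rr b) q = partial i f (lsubmx q) / f (lsubmx q) * (a == b)%:R.
Proof.
move=> uF sym f0 df.
set x := lsubmx q; set y := rsubmx q.
rewrite /Christoffel big_split_ord /=.
rewrite [X in X + _]big1 => [|l _]; last by rewrite Gi_RL mul0r.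
have gsym c : gF y b c = gF y c b by rewrite -[in LHS]sym mxE.
have hinv : invmx (f x ^+ 2 *: gF y) = (f x ^+ 2)^-1 *: invmx (gF y).
  by apply: invmxZ; rewrite unitmxZ // unitfE expf_neq0.
have -> : \sum_(c < m) invmx (G q) (Rr a) (Rr c) *
    (partial (L i) (fun q0 => G q0 (Rr b) (Rr c)) q +
     partial (Rr b) (fun q0 => G q0 (L i) (Rr c)) q -
     partial (Rr c) (fun q0 => G q0 (L i) (Rr b)) q)
  = \sum_(c < m) ((f x ^+ 2)^-1 * 2 * f x * partial i f x) * (invmx (gF y) a c * gF y c b).
  apply: eq_bigr => c _.
  rewrite PDbase PDbase subr0 addr0 Gi_RR -/x -/y hinv PD2 // -/x -/y mxE gsym.
  exact: alg4.
rewrite -mulr_sumr.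
have -> : \sum_(c < m) invmx (gF y) a c * gF y c b = (a == b)%:R.
  transitivity ((invmx (gF y) *m gF y) a b); first by rewrite mxE.
  by rewrite mulVmx // mxE.
exact: alg5.
Qed.

End Warped.
Section Ricci.
Variables (R : realType) (n m : nat) (f : 'rV[R]_n -> R) (gF : 'rV[R]_m -> 'M[R]_m).
Local Notation G := (warped_metric f gF).
Local Notation L i := (lshift m i).
Local Notation Rr a := (rshift n a).

Lemma alg6 (A fj fi fx : R) : fx != 0 ->
  - ((A * fx - fi * fj) / fx ^+ 2) - fj / fx * (fi / fx) = - (A / fx).
Proof. by move=> f0; field. Qed.

Lemma alg7 (A fx : R) k : (- (A / fx)) *+ k = - (k%:R * A / fx).
Proof. by rewrite -[LHS]mulr_natl mulrN mulrA. Qed.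

Lemma Dquot (F H : 'rV[R]_n -> R) x v : H x != 0 -> derivable F x v -> derivable H x v ->
  'D_v (fun z => F z / H z) x = ('D_v F x * H x - F x * 'D_v H x) / H x ^+ 2.
Proof.
move=> H0 dF dH.
have dHV := derivableV H0 dH.
rewrite (deriveM dF dHV) (deriveV H0 dH) !scaleE.
by field.
Qed.

Lemma ricci_LL p i j : gF (rsubmx p) \in unitmx -> (gF (rsubmx p))^T = gF (rsubmx p) ->
  (forall z, 0 < f z) -> smooth_on setT f ->
  Ricci G (L i) (L j) p = - (m%:R * partial j (partial i f) (lsubmx p) / f (lsubmx p)).
Proof.
move=> uF sym fpos sf.
set x := lsubmx p.
have fn0 z : f z != 0 by rewrite gt_eqF.
have CH4q t a b k : Christoffel G (Rr a) (L k) (Rr b) (p + t *: delta_mx 0 (L j))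
   = partial k f (x + t *: delta_mx 0 j) / f (x + t *: delta_mx 0 j) * (a == b)%:R.
  rewrite CH4 ?rsub_line ?lsub_line //; exact: smooth0.
have CH4p a k b : Christoffel G (Rr a) (L k) (Rr b) p = partial k f x / f x * (a == b)%:R.
  by have := CH4q 0 a b k; rewrite !scale0r !addr0.
have Dq a : partial (L j) (fun q => Christoffel G (Rr a) (L i) (Rr a) q) p
    = partial j (fun z => partial i f z / f z) x.
  rewrite /partial; apply: (@derive_lineE R _ _ _ _ (fun z => partial i f z / f z) p _ x) => t.
  by rewrite CH4q eqxx mulr1.
have Dq2 : partial j (fun z => partial i f z / f z) x
   = (partial j (partial i f) x * f x - partial i f x * partial j f x) / f x ^+ 2.
  by rewrite /partial (Dquot (fn0 x) (sd1 sf) (sd0 sf)).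
rewrite /Ricci big_split_ord /=.
rewrite [X in X + _]big1 => [|k _]; last first.
  rewrite (@partial_cst R _ _ 0) => [|q]; last exact: CH1.
  rewrite (@partial_cst R _ _ 0) => [|q]; last exact: CH1.
  rewrite subrr add0r big1 // => l _.
  by rewrite !CH1 !mulr0 subrr.
rewrite add0r.
have term a : partial (Rr a) (Christoffel G (Rr a) (L i) (L j)) p -
    partial (L j) (Christoffel G (Rr a) (L i) (Rr a)) p +
    \sum_(l < n + m) (Christoffel G (Rr a) (Rr a) l p * Christoffel G l (L i) (L j) p -
       Christoffel G (Rr a) (L j) l p * Christoffel G l (L i) (Rr a) p)
   = - (partial j (partial i f) x / f x).
  rewrite (@partial_cst R _ _ 0) => [|q]; last exact: CH1.
  rewrite Dq Dq2 sub0r big_split_ord /=.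
  rewrite [X in _ + (X + _)]big1 => [|l _]; last by rewrite CH1 CH3 !mulr0 subrr.
  rewrite add0r (bigD1 a) //= big1 => [|b nba]; last first.
    by rewrite CH1 !CH4p (negbTE nba) !mulr0 subrr.
  rewrite CH1 !CH4p mulr0 sub0r eqxx !mulr1 addr0.
  by apply: alg6.
rewrite (eq_bigr _ (fun a _ => term a)) sumr_const card_ord.
exact: alg7.
Qed.

End Ricci.

Lemma hess_LL (R : realType) (n m : nat) (f : 'rV[R]_n -> R) (gF : 'rV[R]_m -> 'M[R]_m)
  (h : 'rV[R]_n -> R) p i j :
  Hess (warped_metric f gF) (fun q => h (lsubmx q)) (lshift m i) (lshift m j) p
  = partial i (partial j h) (lsubmx p).
Proof.
rewrite /Hess big1 => [|k _]; last by rewrite CH1 mul0r.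
rewrite subr0.
have E1 : partial (lshift m j) (fun q => h (lsubmx q)) = fun q => partial j h (lsubmx q).
  apply/funext => q; exact: (partial_L (fun x (_ : 'rV[R]_m) => h x) q j).
rewrite E1; exact: (partial_L (fun x (_ : 'rV[R]_m) => partial j h x) p i).
Qed.

Theorem theorem1 (R : realType) (n m : nat) (U : set 'rV[R]_m)
  (gF : 'rV[R]_m -> 'M[R]_m) (f h : 'rV[R]_n -> R) (rho : R) :
  (2 <= n)%N -> (1 <= m)%N ->
  open U -> U !=set0 -> riemannian_metric_on U gF ->
  smooth_on setT f -> smooth_on setT h -> (forall x, 0 < f x) ->
  (forall p : 'rV[R]_(n + m), U (rsubmx p) -> forall i j : 'I_(n + m),
      Ricci (warped_metric f gF) i j p
      + Hess (warped_metric f gF) (fun q => h (lsubmx q)) i j p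
      = rho * warped_metric f gF p i j) ->
  exists a b : 'I_n -> R, exists P : R -> R,
    (forall t, derivable P t 1) /\ continuous (derive1 P) /\
    forall x : 'rV[R]_n, f x = P (\sum_(i < n) (a i * x ord0 i + b i)).
Proof.
move=> _ m1 _ [y0 Uy0] [_ [symF posF]] sf sh fpos Hyp.
have BASE : forall x i j, partial i (partial j h) x - m%:R * partial j (partial i f) x / f x
     = rho * (i == j)%:R.
  move=> x i j.
  pose p : 'rV[R]_(n + m) := row_mx x y0.
  have lp : lsubmx p = x by rewrite row_mxKl.
  have rp : rsubmx p = y0 by rewrite row_mxKr.
  have U0 : U (rsubmx p) by rewrite rp.
  have := Hyp p U0 (lshift m i) (lshift m j).
  have uF : gF (rsubmx p) \in unitmx by rewrite rp; exact: posdef_unit (posF y0 Uy0).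
  have sF : (gF (rsubmx p))^T = gF (rsubmx p) by rewrite rp; exact: symF.
  rewrite (ricci_LL i j uF sF fpos sf) hess_LL G_LL lp.
  by rewrite addrC.
have m0 : (m != 0)%N by rewrite -lt0n.
have C := compatC sf sh fpos m0 BASE.
exact: base_final sf C.
Qed.
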